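(* Fix integers $m \ge 1$ and $n_1,\dots,n_m \ge 2$, and consider the $m$-dimensional single parity-check product code of dimension $k = \prod_{\ell=1}^m (n_\ell-1)$, transmitted over the binary erasure channel with erasure probability $\epsilon \in [0,1]$ and decoded with Elias' decoder (see context). Let $P_{\mathrm{E}}$ denote the resulting block error probability. Define $\epsilon_0 = \epsilon$ and \[ \epsilon_\ell = \epsilon_{\ell-1}\left(1-(1-\epsilon_{\ell-1})^{n_\ell-1}\right) \quad \text{for } \ell = 1,\dots,m, \] and set $q_{\max} = \epsilon_m$. Then \[ q_{\max} \le P_{\mathrm{E}} \le k\, q_{\max}. \]
   Context: Index set and code. Let $A = \{1,\dots,n_1\}\times\cdots\times\{1,\dots,n_m\}$. The single parity-check product code is the set of binary arrays $x: A \to \{0,1\}$ in which every line in every direction $\ell$ has even weight; a line in direction $\ell$ is obtained by fixing all coordinates except the $\ell$-th. The information positions are $A_{\mathrm{info}} = \{a : a_\ell \le n_\ell-1 \text{ for all } \ell\}$, and a codeword is determined by its entries there. Channel. Each entry is independently erased with probability $\epsilon$ and otherwise received correctly. Notation. For $\ell = 0,\dots,m$ let $A_\ell = \{a \in A : a_i \le n_i-1 \text{ for } i \le \ell\}$. For $a \in A$ and $b \in \{1,\dots,n_\ell\}$, let $a[\ell\leftarrow b]$ denote $a$ with its $\ell$-th coordinate replaced by $b$. Elias' decoder. This decoder processes dimensions $1$ to $m$ in one sweep, applying local SPC decoding to each line. $E_0(a)$ is true iff entry $a$ is not erased. For $\ell \ge 1$ and $a \in A_\ell$, $E_\ell(a)$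 is true iff $E_{\ell-1}(a)$ is true, or $E_{\ell-1}(a[\ell\leftarrow b])$ is true for every $b \ne a_\ell$ with $1 \le b \le n_\ell$. The information bit at $a$ is recovered iff $E_m(a)$ is true, and erased otherwise; the decoder never makes a wrong decision. A block error occurs iff some $a \in A_{\mathrm{info}}$ has $E_m(a)$ false, and $P_{\mathrm{E}}$ is the probability of this event. *)

(* Defs.v *)
From HB Require Import structures.
From mathcomp Require Import all_boot all_order all_algebra.
Set Implicit Arguments. Unset Strict Implicit. Unset Printing Implicit Defensive.
Import Order.TTheory GRing.Theory Num.Theory.

(* Dimensions are indexed 0..m-1 (dimension l+1 of the paper is index l);
   coordinates are 0-based: coordinate l ranges over 0..n l - 1.
   Only n 0, ..., n (m-1) are relevant. *)

Definition bnd (m : nat) (n : nat -> nat) : nat := \max_(l < m) n l.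

(* Ambient finite type of coordinate vectors; the index set A is a subset. *)
Definition pos (m : nat) (n : nat -> nat) := {ffun 'I_m -> 'I_(bnd m n)}.

Definition Aset m n : {set pos m n} := [set a : pos m n | [forall l : 'I_m, a l < n l]].

(* Information positions: a_l <= n_l - 2 (0-based), i.e. all but the last value. *)
Definition Ainfo m n : {set pos m n} :=
  [set a in Aset m n | [forall l : 'I_m, a l < (n l).-1]].

Definition upd m n (a : pos m n) (l : 'I_m) (b : 'I_(bnd m n)) : pos m n :=
  [ffun j => if j == l then b else a j].

(* Elias' decoder: Edec S l a is E_l(a), where S is the set of erased entries.
   E_{l+1}(a) = E_l(a) || forall b in line (b <> a_l), E_l(a[l <- b]). *)
Fixpoint Edec m n (S : {set pos m n}) (l : nat) (a : pos m n) : bool :=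
  match l with
  | 0 => a \notin S
  | l'.+1 =>
      Edec S l' a ||
      match (insub l' : option 'I_m) with
      | Some i => [forall b : 'I_(bnd m n),
                     ((b < n l') && (b != a i)) ==> Edec S l' (upd a i b)]
      | None => false
      end
  end.

Definition block_error m n (S : {set pos m n}) : bool :=
  [exists a in Ainfo m n, ~~ Edec S m a].

(* Block error probability over the BEC(eps): each entry of A is erased
   independently with probability eps; S ranges over erasure patterns. *)
Definition PE (R : ringType) m n (eps : R) : R :=
  \sum_(S : {set pos m n} | S \subset Aset m n)
     eps ^+ #|S| * (1 - eps) ^+ (#|Aset m n| - #|S|) * (block_error S)%:R.

Fixpoint eps_seq (R : ringType) (n : nat -> nat) (eps : R) (l : nat) : R :=
  match l with
  | 0 => eps
  | l'.+1 => let e := eps_seq n eps l' in e * (1 - (1 - e) ^+ (n l' - 1))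
  end.

Definition code_dim m (n : nat -> nat) : nat := \prod_(l < m) (n l - 1).

(* Main.v *)
Require Import Defs.
From HB Require Import structures.
From mathcomp Require Import all_boot all_order all_algebra.
Import Order.TTheory GRing.Theory Num.Theory.
Local Open Scope ring_scope.

Section Meas.
Variables (R : comNzRingType) (T : finType) (p : T -> R).

Definition mu (S : {set T}) : R := \prod_u (if u \in S then p u else 1 - p u).
Definition Ex (f : {set T} -> R) : R := \sum_(S : {set T}) mu S * f S.

Lemma sum_prod_set (q : T -> bool -> R) :
  \sum_(S : {set T}) \prod_u q u (u \in S) = \prod_u (q u true + q u false).
Proof.
rewrite bigA_distr; apply: eq_big => // S _.
by apply: eq_bigr => u _; case: (u \in S).
Qed.

Lemma Ex1 : Ex (fun _ => 1) = 1.
Proof.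
rewrite /Ex; under eq_bigr do rewrite mulr1.
rewrite (sum_prod_set (fun u b => if b then p u else 1 - p u)).
by apply: big1 => u _; rewrite addrC subrK.
Qed.

Lemma sum_mu : \sum_(S : {set T}) mu S = 1.
Proof. by rewrite -Ex1 /Ex; apply: eq_bigr => S _; rewrite mulr1. Qed.

Lemma Ex_point a : Ex (fun S => (a \in S)%:R) = p a.
Proof.
rewrite /Ex.
transitivity (\sum_(S : {set T}) \prod_u
   (fun u b => if u == a then (if b then p u else 0) else (if b then p u else 1 - p u)) u (u \in S)).
  apply: eq_bigr => S _; rewrite /mu (bigD1 a) //= (bigD1 a (P := predT)) //= eqxx.
  case: (a \in S); rewrite ?mulr1 ?mulr0 ?mul0r //.
  congr (_ * _); apply: eq_bigr => u /negbTE ->; by [].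
rewrite (sum_prod_set (fun u b => if u == a then (if b then p u else 0) else (if b then p u else 1 - p u))).
rewrite (bigD1 a) //= eqxx addr0 big1 ?mulr1 // => u /negbTE ->.
by rewrite addrC subrK.
Qed.

Lemma Ex_sub f g : Ex (fun S => f S - g S) = Ex f - Ex g.
Proof. by rewrite /Ex -sumrB; apply: eq_bigr => S _; rewrite mulrBr. Qed.

Lemma Ex_sum (I : finType) (P : pred I) (F : I -> {set T} -> R) :
  Ex (fun S => \sum_(i | P i) F i S) = \sum_(i | P i) Ex (F i).
Proof.
rewrite /Ex; under eq_bigr do rewrite mulr_sumr.
exact: exchange_big.
Qed.

Lemma Ex_ext f g : (forall S, f S = g S) -> Ex f = Ex g.
Proof. by move=> H; rewrite /Ex; apply: eq_bigr => S _; rewrite H. Qed.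

Section Indep.
Variable V : {set T}.
Definition swp (P : {set T} * {set T}) : {set T} * {set T} :=
  ((P.1 :&: V) :|: (P.2 :&: ~: V), (P.2 :&: V) :|: (P.1 :&: ~: V)).

Lemma swpK : involutive swp.
Proof.
move=> [A B]; rewrite /swp /=; congr pair; apply/setP => x; rewrite !inE;
  by case: (x \in V); case: (x \in A); case: (x \in B).
Qed.

Lemma mu_swp P : mu (swp P).1 * mu (swp P).2 = mu P.1 * mu P.2.
Proof.
rewrite /mu -big_split -big_split /=; apply: eq_bigr => u _; rewrite !inE.
by case: (u \in V); case: (u \in P.1); case: (u \in P.2); rewrite //= mulrC.
Qed.

Lemma Ex_indep f g : (forall S, f S = f (S :&: V)) -> (forall S, g S = g (S :&: ~: V)) ->
  Ex (fun S => f S * g S) = Ex f * Ex g.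
Proof.
move=> Hf Hg.
rewrite /Ex mulr_suml.
under [RHS]eq_bigr do rewrite mulr_sumr.
rewrite pair_bigA (reindex_inj (inv_inj swpK)) /=.
transitivity (\sum_(S : {set T}) \sum_(S' : {set T}) (mu S * f S * g S) * mu S').
  by apply: eq_bigr => S _; rewrite -mulr_sumr sum_mu mulr1 mulrA.
rewrite pair_bigA /=; apply: eq_bigr => [[A B]] _ /=.
have e1 : f ((A :&: V) :|: (B :&: ~: V)) = f A.
  rewrite Hf [in RHS]Hf; congr f; apply/setP => x; rewrite !inE;
  by case: (x \in V); case: (x \in A); case: (x \in B).
have e2 : g ((B :&: V) :|: (A :&: ~: V)) = g A.
  rewrite Hg [in RHS]Hg; congr g; apply/setP => x; rewrite !inE;
  by case: (x \in V); case: (x \in A); case: (x \in B).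
rewrite e1 e2.
rewrite mulrACA.
have := mu_swp (A, B); rewrite /swp /= => ->.
by rewrite -!mulrA; congr (_ * _); rewrite [RHS]mulrC -mulrA.
Qed.
End Indep.

Lemma Ex_prod (I : eqType) (r : seq I) (V : I -> {set T}) (F : I -> {set T} -> R) :
  uniq r ->
  (forall i j x, i \in r -> j \in r -> i != j -> x \in V i -> x \in V j -> False) ->
  (forall i S, F i S = F i (S :&: V i)) ->
  Ex (fun S => \prod_(i <- r) F i S) = \prod_(i <- r) Ex (F i).
Proof.
move=> + + HF; elim: r => [|i r IH] /=.
  by move=> _ _; rewrite big_nil; under Ex_ext do rewrite big_nil; exact: Ex1.
move=> /andP[ir ur] Hd.
under Ex_ext do rewrite big_cons.
rewrite big_cons (Ex_indep (V i)) ?IH //.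
- by move=> j k x jr kr; apply: Hd; rewrite inE ?jr ?kr orbT.
move=> S; apply: eq_big_seq => j jr; rewrite HF [in RHS]HF; congr F.
apply/setP => x; rewrite !inE; case xj: (x \in V j); rewrite ?andbF ?andbT //.
have [xi|xi] := boolP (x \in V i); last by rewrite andbT.
exfalso; apply: (Hd i j x) => //.
- by rewrite inE eqxx.
- by rewrite inE jr orbT.
- by apply/eqP => eij; move: ir; rewrite eij jr.
Qed.

End Meas.
Arguments Ex {R T}.
Arguments mu {R T}.

Section Code.
Variables (m : nat) (n : nat -> nat).
Local Notation P := (pos m n).

Lemma Edec_local l (a : P) (S S' : {set P}) :
  (forall x : P, (forall j : 'I_m, (l <= j)%N -> x j = a j) -> (x \in S) = (x \in S')) ->
  Edec S l a = Edec S' l a.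
Proof.
elim: l a => [|l IH] a H /=.
  by rewrite (H a (fun _ _ => erefl)).
rewrite (IH a); last by move=> x Hx; apply: H => j lj; apply: Hx; exact: ltnW.
congr orb; case: insubP => [i _ vi|_] //.
apply: eq_forallb => b; congr implb; apply: IH => x Hx; apply: H => j lj.
rewrite Hx ?(ltnW lj) // /upd ffunE; case: eqP => // eji.
by move: lj; rewrite eji vi ltnn.
Qed.

Lemma EdecS (S : {set P}) l a (i : 'I_m) : val i = l ->
  Edec S l.+1 a = Edec S l a || [forall b : 'I_(bnd m n),
     ((b < n l)%N && (b != a i)) ==> Edec S l (upd a i b)].
Proof. by move=> <-; rewrite /= valK. Qed.

Lemma card_lt K N (h : (K <= N)%N) : #|[set b : 'I_N | (b < K)%N]| = K.
Proof.
have -> : [set b : 'I_N | (b < K)%N] = widen_ord h @: [set: 'I_K].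
  apply/setP => b; rewrite inE; apply/idP/imsetP => [bK|[j _ ->]] /=; last exact: ltn_ord.
  exists (Ordinal bK); first by rewrite inE.
  exact: val_inj.
rewrite card_imset ?cardsT ?card_ord // => x y /(congr1 val) /= e; exact: val_inj.
Qed.

Lemma bnd_ge l : (l < m)%N -> (n l <= bnd m n)%N.
Proof. by move=> lm; rewrite /bnd; exact: (@bigop.leq_bigmax _ (fun i : 'I_m => n i) (Ordinal lm)). Qed.

Lemma upd_id (a : P) i : upd a i (a i) = a.
Proof. by apply/ffunP => j; rewrite ffunE; case: eqP => // ->. Qed.

Lemma upd_Aset (a : P) (i : 'I_m) (b : 'I_(bnd m n)) : a \in Aset m n -> (b < n i)%N -> upd a i b \in Aset m n.
Proof.
rewrite !inE => /forallP H bn; apply/forallP => j; rewrite ffunE.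
by case: eqP => [->|_] //; exact: H.
Qed.

Variables (R : realFieldType) (eps : R).
Definition pE (u : P) : R := if u \in Aset m n then eps else 0.

Lemma Ex_Edec l : (l <= m)%N -> forall a, a \in Aset m n ->
  Ex pE (fun S => (~~ Edec S l a)%:R) = eps_seq n eps l.
Proof.
elim: l => [|l IH] lm a aA.
  by rewrite /=; under Ex_ext do rewrite negbK; rewrite Ex_point /pE aA.
pose i : 'I_m := Ordinal lm.
have vi : val i = l by [].
pose Bs := [set b : 'I_(bnd m n) | (b < n l)%N].
have aiB : a i \in Bs by rewrite inE; move: aA; rewrite inE => /forallP /(_ i).
pose F b S := (~~ Edec S l (upd a i b))%:R : R.
pose G b S := if b == a i then F b S else 1 - F b S.
have key : forall S, (~~ Edec S l.+1 a)%:R = F (a i) S - \prod_(b <- enum Bs) G b S.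
  move=> S; rewrite (@EdecS S l a i vi) negb_or.
  rewrite big_enum /= (bigD1 (a i)) //= /G eqxx.
  have -> : \prod_(b in Bs | b != a i) (if b == a i then F b S else 1 - F b S) =
     ([forall b : 'I_(bnd m n), ((b < n l)%N && (b != a i)) ==> Edec S l (upd a i b)])%:R.
    rewrite (eq_bigr (fun b => (Edec S l (upd a i b))%:R)); last first.
      by move=> b /andP[_ /negbTE ->]; rewrite /F; case: (Edec _ _ _); rewrite /= ?mulr0n ?mulr1n ?subr0 ?subrr.
    case: (boolP [forall b : 'I_(bnd m n), ((b < n l)%N && (b != a i)) ==> Edec S l (upd a i b)]) => [/forallP H | /forallPn [b]].
      rewrite big1 // => b /andP[bB nb]; have := H b; rewrite inE in bB.
      by rewrite bB nb /= => ->.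
    rewrite negb_imply => /andP[/andP[bl nb] nE].
    rewrite (bigD1 b) /=; last by rewrite inE bl nb.
    by rewrite (negbTE nE) mul0r.
  rewrite /F upd_id; case: (Edec S l a); case: [forall _, _];
    by rewrite /= ?mul0r ?mul1r ?mulr0 ?subrr ?subr0.
under Ex_ext do rewrite key.
have ExF : forall b, b \in Bs -> Ex pE (F b) = eps_seq n eps l.
  move=> b; rewrite inE => bl; apply: IH; first exact: ltnW.
  exact: upd_Aset.
rewrite Ex_sub ExF //.
rewrite (@Ex_prod _ _ pE _ (enum Bs) (fun b => [set x : P | x i == b]) G); first last.
- move=> b S; rewrite /G /F (@Edec_local l (upd a i b) S (S :&: [set x : P | x i == b])) //.
  move=> x Hx; rewrite !inE (Hx i) /upd ?ffunE ?eqxx ?andbT //.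
- move=> b c x _ _ bc; rewrite !inE => /eqP xb /eqP xc; move: bc; by rewrite -xb -xc eqxx.
- exact: enum_uniq.
rewrite big_enum /= (bigD1 (a i)) //= /G eqxx.
rewrite (eq_bigr (fun _ => 1 - eps_seq n eps l)); last first.
  move=> b /andP[bB /negbTE ->].
  by rewrite (@Ex_sub _ _ pE (fun _ => 1) (F b)) Ex1 ExF.
rewrite (eq_bigl (mem (Bs :\ a i))); last by move=> b; rewrite !inE andbC.
rewrite prodr_const ExF //.
have cB : #|Bs| = n l by apply: card_lt; apply: bnd_ge.
have -> : #|Bs :\ a i| = (n l - 1)%N by rewrite -cB (cardsD1 (a i) Bs) aiB add1n subn1.
by rewrite /= mulrBr mulr1.
Qed.

End Code.

Section Final.
Variables (m : nat) (n : nat -> nat) (R : realFieldType) (eps : R).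
Local Notation P := (pos m n).

Lemma PE_Ex : PE m n eps = Ex (@pE m n R eps) (fun S => (block_error S)%:R).
Proof.
rewrite /PE /Ex [RHS](bigID (fun S : {set P} => S \subset Aset m n)) /=.
rewrite [X in _ = _ + X]big1 ?addr0; last first.
  by move=> S /subsetPn [u uS uA]; rewrite /mu (bigD1 u) //= uS /pE (negbTE uA) !mul0r.
apply: eq_bigr => S SA; congr (_ * _).
rewrite /mu (bigID (fun u => u \in S)) /=.
congr (_ * _).
  rewrite (eq_bigr (fun _ => eps)) ?prodr_const // => u uS; by rewrite uS /pE (subsetP SA u uS).
rewrite (bigID (fun u => u \in Aset m n)) /= [X in _ * X]big1 ?mulr1; last first.
  by move=> u /andP[/negbTE -> /negbTE uA]; rewrite /pE uA subr0.
rewrite (eq_bigl (fun u => u \in Aset m n :\: S)); last by move=> u; rewrite !inE.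
rewrite (eq_bigr (fun _ => 1 - eps)); last by move=> u; rewrite in_setD => /andP[/negbTE uS uA]; rewrite uS /pE uA.
by rewrite prodr_const cardsD (setIidPr SA).
Qed.

Lemma mu_ge0 S : 0 <= eps <= 1 -> 0 <= mu (@pE m n R eps) S.
Proof.
move=> /andP[e0 e1]; apply: prodr_ge0 => u _; rewrite /pE.
by case: (u \in S); case: (u \in Aset m n); rewrite ?subr_ge0 ?subr0 ?ler01.
Qed.

Lemma card_Ainfo : (forall l, (l < m)%N -> (2 <= n l)%N) -> #|Ainfo m n| = code_dim m n.
Proof.
move=> n2.
pose Q := fun (l : 'I_m) (b : 'I_(bnd m n)) => (b < (n l).-1)%N.
rewrite /code_dim -sum1_card.
transitivity (\sum_(f in family Q) \prod_(l < m) 1)%N.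
  apply: eq_big => [f|f _]; last by rewrite big1.
  rewrite !inE; apply/andP/familyP => [[_ /forallP H] l|H]; first exact: H l.
  split; apply/forallP => l; have := H l; rewrite unfold_in /Q //.
  move=> h; apply: leq_trans h _; exact: leq_pred.
rewrite -(bigA_distr_big_dep Q (fun _ _ => 1%N)); apply: eq_bigr => l _.
rewrite (eq_bigl (fun b => b \in [set b : 'I_(bnd m n) | (b < (n l).-1)%N])); last by move=> b; rewrite inE.
rewrite sum1_card card_lt ?subn1 //.
apply: leq_trans (leq_pred _) _; exact: bnd_ge.
Qed.

End Final.

Theorem theorem1 (R : realFieldType) (m : nat) (n : nat -> nat) (eps : R) :
  (1 <= m)%N ->
  (forall l : nat, (l < m)%N -> (2 <= n l)%N) ->
  0 <= eps <= 1 ->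
  eps_seq n eps m <= PE m n eps /\ PE m n eps <= (code_dim m n)%:R * eps_seq n eps m.
Proof.
move=> m1 n2 e01.
have bpos : (0 < bnd m n)%N.
  exact: leq_trans (ltnW (n2 0%N m1)) (@bnd_ge m n 0 m1).
pose z : 'I_(bnd m n) := Ordinal bpos.
pose a0 : pos m n := [ffun _ => z].
have a0I : a0 \in Ainfo m n.
  rewrite !inE; apply/andP; split; apply/forallP => l; rewrite ffunE /=;
  have := n2 l (ltn_ord l); case: (n l) => [|[|k]] //.
have AiA : forall a, a \in Ainfo m n -> a \in Aset m n.
  by move=> a; rewrite [a \in Ainfo m n]inE => /andP[].
rewrite PE_Ex; split.
  rewrite -(@Ex_Edec m n R eps m (leqnn m) a0 (AiA a0 a0I)).
  apply: ler_sum => S _; apply: ler_wpM2l; first exact: mu_ge0.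
  rewrite ler_nat; case E: (Edec S m a0) => //=.
  by have -> : block_error S by apply/existsP; exists a0; rewrite a0I E.
apply: (@le_trans _ _ (Ex (@pE m n R eps) (fun S => \sum_(a in Ainfo m n) (~~ Edec S m a)%:R))).
  apply: ler_sum => S _; apply: ler_wpM2l; first exact: mu_ge0.
  case: (boolP (block_error S)) => [/existsP [a /andP[aI nE]]|_]; last by apply: sumr_ge0.
  by rewrite (bigD1 a) //= nE lerDl sumr_ge0.
rewrite Ex_sum (eq_bigr (fun _ => eps_seq n eps m)); last first.
  by move=> a aI; apply: Ex_Edec => //; apply: AiA.
by rewrite sumr_const (@card_Ainfo m n n2) mulr_natl.
Qed.
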